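(* Let $\mathcal{D}[t]\subset\mathcal{H}\subset\mathcal{D}^\times[t^\times]$ be a rigged Hilbert space with $\mathcal{D}[t]$ complete and reflexive. A sequence $\{\xi_n\}\subset\mathcal{D}$ is Riesz-Fischer-like if and only if there exists a Bessel-like sequence $\{\zeta_n\}$ in $\mathcal{D}^\times$ such that $\{\xi_n\}$ and $\{\zeta_n\}$ are biorthogonal, i.e. $\langle\zeta_n,\xi_k\rangle=\delta_{n,k}$ for all $n,k\in\mathbb{N}$.
   Context: A rigged Hilbert space $\mathcal{D}[t]\subset\mathcal{H}\subset\mathcal{D}^\times[t^\times]$: $\mathcal{D}$ is a dense subspace of the Hilbert space $\mathcal{H}$ with a locally convex topology $t$ finer than the norm topology, $\mathcal{D}^\times$ is the space of continuous conjugate-linear functionals on $\mathcal{D}[t]$ with the strong dual topology $t^\times=\beta(\mathcal{D}^\times,\mathcal{D})$, $\mathcal{H}\subset\mathcal{D}^\times$, and the duality form $\langle\Phi,\eta\rangle$ (value of $\Phi\in\mathcal{D}^\times$ at $\eta\in\mathcal{D}$) extends the inner product. $\mathcal{L}(\mathcal{D},\mathcal{D}^\times)$ denotes the continuous linear maps $\mathcal{D}[t]\to\mathcal{D}^\times[t^\times]$. $\mathcal{C}(\mathcal{D},\mathcal{H})$ is the set of $X\in\mathcal{L}(\mathcal{D},\mathcal{D}^\times)$ mapping $\mathcal{D}$ into $\mathcal{H}$ continuously from $\mathcal{D}[t]$ into $\mathcal{H}$. A sequence $\{\xi_n\}\subset\mathcal{D}$ is Riesz-Fischer-like if for every orthonormal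 basis $\{e_n\}$ of $\mathcal{H}$ there exists $S\in\mathcal{C}(\mathcal{D},\mathcal{H})$ with $S\xi_n=e_n$ for all $n$. A sequence $\{\zeta_n\}\subset\mathcal{D}^\times$ is Bessel-like if for every bounded subset $\mathcal{M}$ of $\mathcal{D}[t]$, $\sup_{\eta\in\mathcal{M}}\sum_{k=1}^\infty|\langle\zeta_k,\eta\rangle|^2<\infty$. *)

(* Defs.v *)
From mathcomp Require Import all_boot all_algebra.
From mathcomp Require Import reals.
From mathcomp Require Import complex.
Set Implicit Arguments.
Unset Strict Implicit.
Unset Printing Implicit Defensive.
Import GRing.Theory Num.Theory ComplexField.
Local Open Scope ring_scope.

(* D is a predicate on H (a dense subspace), and the locally convex topology t
   on D is given by a directed family of seminorms p : I -> H -> R (only their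
   values on D matter).  Elements of D^x are conjugate-linear t-continuous
   functionals Phi : H -> C (only their values on D matter); the duality form
   <Phi, eta> is Phi eta, and h \in H is identified with eta |-> ip h eta. *)

Section RiggedHilbert.
Variable R : realType.
Local Notation C := R[i].
Variable H : lmodType C.
Variable ip : H -> H -> C.

Definition cabs (z : C) : R := Normc.normc z.
Definition hnorm (x : H) : R := Num.sqrt (cabs (ip x x)).

Definition is_hilbert : Prop :=
  [/\ (forall (a : C) (x y z : H), ip (a *: x + y) z = a * ip x z + ip y z),
      (forall x y : H, ip x y = ((ip y x)^*)%C),
      (forall x : H, x != 0 -> exists r : R, 0 < r /\ ip x x = r%:C%C) &
      (forall u : nat -> H,
         (forall eps : R, 0 < eps -> exists N : nat, forall m n : nat,
             (N <= m)%N -> (N <= n)%N -> hnorm (u m - u n) < eps) ->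
         exists l : H, forall eps : R, 0 < eps -> exists N : nat,
             forall n : nat, (N <= n)%N -> hnorm (u n - l) < eps)].

Definition is_onb (e : nat -> H) : Prop :=
  (forall n m : nat, ip (e n) (e m) = (n == m)%:R) /\
  (forall x : H, (forall n, ip x (e n) = 0) -> x = 0).

Variable D : H -> Prop.
Variable I : Type.
Variable p : I -> H -> R.

Definition rigged : Prop :=
  [/\ D 0 /\ (forall (a : C) (x y : H), D x -> D y -> D (a *: x + y)),
      (forall (x : H) (eps : R), 0 < eps -> exists d, D d /\ hnorm (x - d) < eps),
      (forall i x, D x -> 0 <= p i x) /\
      (forall i x y, D x -> D y -> p i (x + y) <= p i x + p i y) /\
      (forall i (a : C) x, D x -> p i (a *: x) = cabs a * p i x),
      (forall i j, exists k, forall x, D x -> p i x <= p k x /\ p j x <= p k x) &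
      (exists i (c : R), forall x, D x -> hnorm x <= c * p i x)].

Definition tbounded (M : H -> Prop) : Prop :=
  (forall x, M x -> D x) /\ (forall i, exists c : R, forall x, M x -> p i x <= c).

Definition is_dual (Phi : H -> C) : Prop :=
  (forall (a : C) x y, D x -> D y -> Phi (a *: x + y) = (a^*)%C * Phi x + Phi y) /\
  (exists i (c : R), forall x, D x -> cabs (Phi x) <= c * p i x).

Definition sbounded (B : (H -> C) -> Prop) : Prop :=
  (forall Phi, B Phi -> is_dual Phi) /\
  (forall M, tbounded M -> exists c : R, forall Phi eta, B Phi -> M eta ->
      cabs (Phi eta) <= c).

Definition is_bidual (F : (H -> C) -> C) : Prop :=
  (forall (a : C) Phi Psi, is_dual Phi -> is_dual Psi ->
      F (fun x => a * Phi x + Psi x) = a * F Phi + F Psi) /\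
  (exists M (c : R), tbounded M /\ forall Phi, is_dual Phi -> forall s : R,
      (forall eta, M eta -> cabs (Phi eta) <= s) -> cabs (F Phi) <= c * s).

Definition tcomplete : Prop :=
  forall (A : Type) (le : A -> A -> Prop),
    inhabited A -> (forall a, le a a) ->
    (forall a b c, le a b -> le b c -> le a c) ->
    (forall a b, exists c, le a c /\ le b c) ->
    forall x : A -> H, (forall a, D (x a)) ->
    (forall i (eps : R), 0 < eps -> exists a0, forall a b,
        le a0 a -> le a0 b -> p i (x a - x b) < eps) ->
    exists y, D y /\ forall i (eps : R), 0 < eps -> exists a0, forall a,
        le a0 a -> p i (x a - y) < eps.

(* D[t] is reflexive: the canonical map from D into the strong bidual is
   onto (semi-reflexivity) and t coincides with the strong topology
   beta(D, D^x) (seminorms xi |-> sup_{Phi in B} |<Phi, xi>|, B bounded in D^x). *)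
Definition treflexive : Prop :=
  [/\ (forall F, is_bidual F -> exists xi, D xi /\ forall Phi, is_dual Phi -> F Phi = Phi xi),
      (forall i, exists B (c : R), sbounded B /\ forall xi (s : R), D xi ->
          (forall Phi, B Phi -> cabs (Phi xi) <= s) -> p i xi <= c * s) &
      (forall B, sbounded B -> exists i (c : R), forall xi Phi, D xi -> B Phi ->
          cabs (Phi xi) <= c * p i xi)].

Definition in_L (X : H -> H -> C) : Prop :=
  [/\ (forall (a : C) x y eta, D x -> D y -> D eta ->
          X (a *: x + y) eta = a * X x eta + X y eta),
      (forall x, D x -> is_dual (X x)) &
      (forall M, tbounded M -> exists i (c : R), forall xi eta, D xi -> M eta ->
          cabs (X xi eta) <= c * p i xi)].

Definition in_CDH (X : H -> H -> C) : Prop :=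
  in_L X /\ exists S : H -> H,
    (forall xi eta, D xi -> D eta -> X xi eta = ip (S xi) eta) /\
    (exists i (c : R), forall xi, D xi -> hnorm (S xi) <= c * p i xi).

Definition riesz_fischer_like (xi : nat -> H) : Prop :=
  forall e : nat -> H, is_onb e ->
    exists X, in_CDH X /\ forall n eta, D eta -> X (xi n) eta = ip (e n) eta.

Definition bessel_like (zeta : nat -> H -> C) : Prop :=
  (forall n, is_dual (zeta n)) /\
  (forall M, tbounded M -> exists c : R, forall eta, M eta -> forall N : nat,
      \sum_(k < N) cabs (zeta k eta) ^+ 2 <= c).

End RiggedHilbert.

(* Main.v *)
Require Import Defs.
From mathcomp Require Import all_boot all_algebra.
From mathcomp Require Import reals classical_sets.
From mathcomp Require Import complex.
From mathcomp Require Import ring lra.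
From Stdlib Require Import ClassicalEpsilon FunctionalExtensionality.
Import GRing.Theory Num.Theory ComplexField.
Import order.Order.TTheory.
Local Open Scope ring_scope.
Set Implicit Arguments.
Unset Strict Implicit.

Section Basic.
Variable R : realType.
Local Notation C := R[i].
Variable H : lmodType C.
Variable ip : H -> H -> C.
Hypothesis hH : is_hilbert ip.

Lemma realCB (u v : R) : ((u - v)%:C = u%:C - v%:C)%C.
Proof. exact: rmorphB. Qed.
Lemma realCD (u v : R) : ((u + v)%:C = u%:C + v%:C)%C.
Proof. exact: rmorphD. Qed.
Lemma realCM (u v : R) : ((u * v)%:C = u%:C * v%:C)%C.
Proof. exact: rmorphM. Qed.
Lemma realCV (u : R) : ((u^-1)%:C = (u%:C)^-1)%C.
Proof. exact: fmorphV. Qed.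
Lemma realCX (u : R) n : ((u ^+ n)%:C = (u%:C) ^+ n)%C.
Proof. exact: rmorphXn. Qed.
Lemma realCn n : (((n%:R : R)%:C) = n%:R)%C.
Proof. exact: rmorph_nat. Qed.
Lemma realC_sum (T : Type) (r : seq T) (P : pred T) (f : T -> R) :
  ((\sum_(i <- r | P i) f i)%:C = \sum_(i <- r | P i) (f i)%:C)%C.
Proof. exact: rmorph_sum. Qed.
Lemma realC0 : ((0 : R)%:C = 0)%C.
Proof. by []. Qed.
Lemma realC1 : ((1 : R)%:C = 1)%C.
Proof. by []. Qed.

Lemma cabsE (z : C) : (cabs z)%:C%C = `|z|.
Proof. reflexivity. Qed.

Lemma cabs_ge0 (z : C) : 0 <= cabs z.
Proof. by rewrite -lecR cabsE normr_ge0. Qed.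

Lemma cabsM (z w : C) : cabs (z * w) = cabs z * cabs w.
Proof. by apply: complexI; rewrite rmorphM !cabsE normrM. Qed.

Lemma cabsD (z w : C) : cabs (z + w) <= cabs z + cabs w.
Proof. by rewrite -lecR rmorphD !cabsE ler_normD. Qed.

Lemma cabsJ (z : C) : cabs (conjc z) = cabs z.
Proof. by apply: complexI; rewrite !cabsE normcJ. Qed.

Lemma cabsR (r : R) : 0 <= r -> cabs r%:C%C = r.
Proof. by move=> r0; rewrite /cabs /Normc.normc /= expr0n addr0 sqrtr_sqr ger0_norm. Qed.

Lemma cabs2 (z : C) : ((cabs z ^+ 2)%:C)%C = z * conjc z.
Proof. by rewrite -sqr_normc -cabsE -rmorphXn. Qed.

Lemma conjcD (a b : C) : conjc (a + b) = conjc a + conjc b.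
Proof. exact: rmorphD. Qed.
Lemma conjcM (a b : C) : conjc (a * b) = conjc a * conjc b.
Proof. exact: rmorphM. Qed.
Lemma conjcN (a : C) : conjc (- a) = - conjc a.
Proof. exact: rmorphN. Qed.
Lemma conjcB (a b : C) : conjc (a - b) = conjc a - conjc b.
Proof. exact: rmorphB. Qed.
Lemma conjc_sum (T : Type) (r : seq T) (P : pred T) (f : T -> C) :
  conjc (\sum_(i <- r | P i) f i) = \sum_(i <- r | P i) conjc (f i).
Proof. exact: rmorph_sum. Qed.

Lemma ipDl x y z : ip (x + y) z = ip x z + ip y z.
Proof. by case: hH => h _ _ _; have := h 1 x y z; rewrite scale1r mul1r. Qed.

Lemma ipZl a x z : ip (a *: x) z = a * ip x z.
Proof.
case: hH => h _ _ _; have := h a x 0 z; rewrite addr0 => ->.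
suff -> : ip 0 z = 0 by rewrite addr0.
have := h 1 0 0 z; rewrite scale1r addr0 mul1r => e.
by apply: (addrI (ip 0 z)); rewrite addr0 -e.
Qed.

Lemma ipC x y : ip x y = conjc (ip y x).
Proof. by case: hH. Qed.

Lemma ip0l z : ip 0 z = 0.
Proof. by rewrite -(scale0r (0:H)) ipZl mul0r. Qed.

Lemma ipNl x z : ip (- x) z = - ip x z.
Proof. by rewrite -scaleN1r ipZl mulN1r. Qed.

Lemma ipBl x y z : ip (x - y) z = ip x z - ip y z.
Proof. by rewrite ipDl ipNl. Qed.

Lemma ipDr x y z : ip z (x + y) = ip z x + ip z y.
Proof. by rewrite ipC ipDl conjcD -!ipC. Qed.

Lemma ipZr a x z : ip z (a *: x) = conjc a * ip z x.
Proof. by rewrite ipC ipZl conjcM -!ipC. Qed.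

Lemma ip0r z : ip z 0 = 0.
Proof. by rewrite ipC ip0l conjc0. Qed.

Lemma ipNr x z : ip z (- x) = - ip z x.
Proof. by rewrite ipC ipNl conjcN -ipC. Qed.

Lemma ipBr x y z : ip z (x - y) = ip z x - ip z y.
Proof. by rewrite ipDr ipNr. Qed.

Lemma ip_suml (T : Type) (r : seq T) (P : pred T) (f : T -> H) z :
  ip (\sum_(i <- r | P i) f i) z = \sum_(i <- r | P i) ip (f i) z.
Proof.
elim/big_rec2: _ => [|i y1 y2 _ <-]; first exact: ip0l.
by rewrite ipDl.
Qed.

Lemma ip_sumr (T : Type) (r : seq T) (P : pred T) (f : T -> H) z :
  ip z (\sum_(i <- r | P i) f i) = \sum_(i <- r | P i) ip z (f i).
Proof.
elim/big_rec2: _ => [|i y1 y2 _ <-]; first exact: ip0r.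
by rewrite ipDr.
Qed.

Lemma ip_ge0 x : 0 <= ip x x.
Proof.
have [->|x0] := eqVneq x 0; first by rewrite ip0l.
by case: hH => _ _ h _; case: (h x x0) => r [r0 ->]; rewrite ler0c ltW.
Qed.

Lemma ip_eq0 x : ip x x = 0 -> x = 0.
Proof.
have [//|x0] := eqVneq x 0.
case: hH => _ _ h _; case: (h x x0) => r [r0 ->] /complexI r00.
by move: r0; rewrite r00 ltxx.
Qed.

Lemma ip_realE x : ((cabs (ip x x))%:C)%C = ip x x.
Proof. by rewrite cabsE ger0_norm // ip_ge0. Qed.

Lemma hnorm_ge0 x : 0 <= hnorm ip x.
Proof. exact: sqrtr_ge0. Qed.

Lemma hnorm2 x : hnorm ip x ^+ 2 = cabs (ip x x).
Proof. by rewrite /hnorm sqr_sqrtr // cabs_ge0. Qed.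

Lemma hnorm2C x : ((hnorm ip x ^+ 2)%:C)%C = ip x x.
Proof. by rewrite hnorm2 ip_realE. Qed.

Lemma hnorm_eq0 x : hnorm ip x = 0 -> x = 0.
Proof. by move=> h; apply: ip_eq0; rewrite -hnorm2C h expr0n /=. Qed.

Lemma hnorm0 : hnorm ip 0 = 0.
Proof. by rewrite /hnorm ip0l /cabs Normc.normc0 sqrtr0. Qed.

End Basic.


Section CS.
Variable R : realType.
Local Notation C := R[i].
Variable H : lmodType C.
Variable ip : H -> H -> C.
Hypothesis hH : is_hilbert ip.

Lemma conjcR (r : R) : conjc (r%:C)%C = (r%:C)%C.
Proof. exact: conjc_real. Qed.

Lemma CS x y : cabs (ip x y) <= hnorm ip x * hnorm ip y.
Proof.
have [->|y0] := eqVneq y 0.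
  by rewrite ip0r // /cabs Normc.normc0 hnorm0 // mulr0.
set a := ip x x; set b := ip y y; set c := ip x y.
have hb : b = ((hnorm ip y ^+ 2)%:C)%C by rewrite hnorm2C.
have b0 : b != 0.
  by apply/eqP => /(ip_eq0 hH) /eqP; rewrite (negbTE y0).
have hbR : 0 < hnorm ip y ^+ 2.
  rewrite lt0r sqr_ge0 andbT; apply: contra b0 => /eqP e.
  by rewrite hb e.
set t := c / b.
have ipww : ip (x - t *: y) (x - t *: y) = a - c * conjc c / b.
  rewrite !(ipBl hH, ipBr hH, ipZl hH, ipZr hH) -/a -/b -/c.
  rewrite [ip y x](ipC hH) -/c /t conjcM conjc_inv.
  have -> : conjc b = b by rewrite hb conjcR.
  by field.
have := ip_ge0 hH (x - t *: y); rewrite ipww.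
have ha : a = ((hnorm ip x ^+ 2)%:C)%C by rewrite hnorm2C.
rewrite ha hb -cabs2.
rewrite -realCV -realCM -realCB ler0c.
move=> h.
have h2 : cabs c ^+ 2 <= hnorm ip x ^+ 2 * hnorm ip y ^+ 2.
  by rewrite subr_ge0 ler_pdivrMr // in h.
rewrite -(@ler_pXn2r _ 2) // ?nnegrE ?cabs_ge0 ?mulr_ge0 ?hnorm_ge0 //.
by rewrite exprMn.
Qed.


Lemma hnorm_of v r : 0 <= r -> ip v v = ((r ^+ 2)%:C)%C -> hnorm ip v = r.
Proof.
move=> r0 e; rewrite /hnorm e cabsR ?sqr_ge0 // sqrtr_sqr ger0_norm //.
Qed.

Lemma hnormZ a x : hnorm ip (a *: x) = cabs a * hnorm ip x.
Proof.
apply: hnorm_of; first by rewrite mulr_ge0 ?cabs_ge0 ?hnorm_ge0.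
rewrite (ipZl hH) (ipZr hH) exprMn realCM cabs2 (hnorm2C hH).
by rewrite mulrA.
Qed.

Lemma hnormN x : hnorm ip (- x) = hnorm ip x.
Proof.
by rewrite /hnorm (ipNl hH) (ipNr hH) opprK.
Qed.

Lemma Re_le_cabs (c : C) : complex.Re c <= cabs c.
Proof.
have := normc_ge_Re c; rewrite -cabsE lecR => h.
exact: le_trans (ler_norm _) h.
Qed.

Lemma hnormD x y : hnorm ip (x + y) <= hnorm ip x + hnorm ip y.
Proof.
have e : ip (x + y) (x + y) =
  ((hnorm ip x ^+ 2 + hnorm ip y ^+ 2 + 2 * complex.Re (ip x y))%:C)%C.
  rewrite !(ipDl hH, ipDr hH) !realCD realCM !(hnorm2C hH) [ip y x](ipC hH).
  rewrite (realCn R 2) -addcJ.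
  by ring.
rewrite -(@ler_pXn2r _ 2) // ?nnegrE ?addr_ge0 ?hnorm_ge0 //.
have : ((hnorm ip (x + y) ^+ 2)%:C)%C = ip (x + y) (x + y) by rewrite hnorm2C.
rewrite e => /complexI ->.
have h := le_trans (Re_le_cabs _) (CS x y).
rewrite sqrrD -mulr_natr; nra.
Qed.

Lemma hnormB x y : hnorm ip (x - y) <= hnorm ip x + hnorm ip y.
Proof. by rewrite -(hnormN y) hnormD. Qed.

End CS.


Section Orth.
Variable R : realType.
Local Notation C := R[i].
Variable H : lmodType C.
Variable ip : H -> H -> C.
Hypothesis hH : is_hilbert ip.
Variable e : nat -> H.
Hypothesis he : forall n m : nat, ip (e n) (e m) = (n == m)%:R.

Lemma ip_sumZl (r : seq nat) (a : nat -> C) v :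
  ip (\sum_(k <- r) a k *: e k) v = \sum_(k <- r) a k * ip (e k) v.
Proof. by rewrite (ip_suml hH); apply: eq_bigr => k _; rewrite (ipZl hH). Qed.

Lemma ip_sumZr (r : seq nat) (a : nat -> C) v :
  ip v (\sum_(k <- r) a k *: e k) = \sum_(k <- r) conjc (a k) * ip v (e k).
Proof. by rewrite (ip_sumr hH); apply: eq_bigr => k _; rewrite (ipZr hH). Qed.

Lemma ip_sumZ2 (r : seq nat) (a b : nat -> C) : uniq r ->
  ip (\sum_(k <- r) a k *: e k) (\sum_(k <- r) b k *: e k) =
  \sum_(k <- r) a k * conjc (b k).
Proof.
move=> ur; rewrite ip_sumZl; apply: eq_big_seq => i ir.
rewrite ip_sumZr (bigD1_seq i) //= he eqxx mulr1 big1 ?addr0 //.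
by move=> j ji; rewrite he eq_sym (negbTE ji) mulr0.
Qed.

Lemma pythagoras (r : seq nat) (a : nat -> C) : uniq r ->
  hnorm ip (\sum_(k <- r) a k *: e k) ^+ 2 = \sum_(k <- r) cabs (a k) ^+ 2.
Proof.
move=> ur; apply: complexI.
by rewrite (hnorm2C hH) ip_sumZ2 // realC_sum; apply: eq_bigr => k _; rewrite cabs2.
Qed.

Lemma bessel v N : \sum_(k < N) cabs (ip v (e k)) ^+ 2 <= hnorm ip v ^+ 2.
Proof.
rewrite -(big_mkord xpredT (fun k => cabs (ip v (e k)) ^+ 2)).
set r := index_iota 0 N.
have ur : uniq r by rewrite /r /index_iota iota_uniq.
set c := fun k => ip v (e k).
set s := \sum_(k <- r) c k *: e k.
have h1 : ip v s = \sum_(k <- r) c k * conjc (c k).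
  by rewrite ip_sumZr; apply: eq_bigr => k _; rewrite mulrC.
have h2 : ip s v = \sum_(k <- r) c k * conjc (c k).
  by rewrite ip_sumZl; apply: eq_bigr => k _; rewrite (ipC hH).
have h3 : ip s s = \sum_(k <- r) c k * conjc (c k) by rewrite ip_sumZ2.
have := ip_ge0 hH (v - s).
rewrite (ipBl hH) !(ipBr hH) h1 h2 h3 -(hnorm2C hH v).
have -> : \sum_(k <- r) c k * conjc (c k) = ((\sum_(k <- r) cabs (c k) ^+ 2)%:C)%C.
  by rewrite realC_sum; apply: eq_bigr => k _; rewrite cabs2.
by rewrite subrr subr0 -realCB ler0c subr_ge0.
Qed.

End Orth.


Lemma le_of_forall_lt (R : realType) (x y : R) :
  (forall eps, 0 < eps -> x < y + eps) -> x <= y.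
Proof.
move=> h; rewrite leNgt; apply/negP => yx.
have := h (x - y); rewrite subr_gt0 => /(_ yx).
by rewrite addrC subrK ltxx.
Qed.

Lemma cauchy_mono (R : realType) (T : nat -> R) (B : R) :
  (forall n, T n <= T n.+1) -> (forall n, T n <= B) ->
  forall eps, 0 < eps -> exists N, forall m n, (N <= m)%N -> (m <= n)%N ->
    T n - T m < eps.
Proof.
move=> Tmon TB eps e0.
have mon : forall a b, (a <= b)%N -> T a <= T b.
  move=> a b /subnK <-; elim: (b - a)%N => [|k IH]; first by rewrite add0n.
  by rewrite addSn; exact: le_trans IH (Tmon _).
pose S : set R := fun x => exists n, x = T n.
have hs : has_sup S by split; [exists (T 0%N); exists 0%N | exists B => x [n ->]].
have [x [N ->] hN] := sup_adherent e0 hs.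
exists N => m n Nm mn.
have := sup_upper_bound hs (ex_intro _ n erefl).
have := mon _ _ Nm.
lra.
Qed.

Section Lim.
Variable R : realType.
Local Notation C := R[i].
Variable H : lmodType C.
Variable ip : H -> H -> C.
Hypothesis hH : is_hilbert ip.

Definition lim_to (u : nat -> H) (l : H) := forall eps : R, 0 < eps ->
  exists N : nat, forall n : nat, (N <= n)%N -> hnorm ip (u n - l) < eps.

Lemma small_eq0 w : (forall eps : R, 0 < eps -> hnorm ip w < eps) -> w = 0.
Proof.
move=> h; apply: (hnorm_eq0 hH); apply/eqP; rewrite eq_le hnorm_ge0 andbT.
apply: le_of_forall_lt => eps e0; rewrite add0r; exact: h.
Qed.

Lemma perp0 (D : H -> Prop)
  (hdense : forall (x : H) (eps : R), 0 < eps -> exists d, D d /\ hnorm ip (x - d) < eps)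
  v : (forall d, D d -> ip v d = 0) -> v = 0.
Proof.
move=> hv; apply: (hnorm_eq0 hH).
have h0 := hnorm_ge0 ip v.
have [//|hp] := eqVneq (hnorm ip v) 0.
have hpos : 0 < hnorm ip v by rewrite lt0r hp.
have [d [Dd hd]] := hdense v (hnorm ip v / 2) (divr_gt0 hpos (ltr0Sn _ 1)).
have e : ip v v = ip v (v - d) by rewrite (ipBr hH) (hv d Dd) subr0.
have := CS hH v (v - d); rewrite -e -(hnorm2 ip).
have := hnorm_ge0 ip (v - d).
nra.
Qed.

Lemma lim_unique u l l' : lim_to u l -> lim_to u l' -> l = l'.
Proof.
move=> hl hl'; apply/eqP; rewrite -subr_eq0; apply/eqP; apply: small_eq0 => eps e0.
have e2 : 0 < eps / 2 by rewrite divr_gt0.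
have [N1 h1] := hl _ e2; have [N2 h2] := hl' _ e2.
have := h1 (maxn N1 N2) (leq_maxl _ _); have := h2 (maxn N1 N2) (leq_maxr _ _).
set w := u (maxn N1 N2).
have -> : l - l' = (w - l') - (w - l) by rewrite opprB [in RHS]addrC [in RHS]addrA subrK.
have := hnormB hH (w - l') (w - l).
lra.
Qed.

Lemma lim_lin u v l m (a : C) : lim_to u l -> lim_to v m ->
  lim_to (fun n => a *: u n + v n) (a *: l + m).
Proof.
move=> hu hv eps e0.
have ca := cabs_ge0 a.
have k0 : 0 < 2 * (cabs a + 1) by rewrite mulr_gt0 // ltr_wpDl.
have [N1 h1] := hu _ (divr_gt0 e0 k0).
have [N2 h2] := hv _ (divr_gt0 e0 (ltr0Sn _ 1)).
exists (maxn N1 N2) => n Nn.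
have := h1 n (leq_trans (leq_maxl _ _) Nn); have := h2 n (leq_trans (leq_maxr _ _) Nn).
have -> : a *: u n + v n - (a *: l + m) = a *: (u n - l) + (v n - m).
  by rewrite scalerBr opprD addrACA.
have := hnormD hH (a *: (u n - l)) (v n - m); rewrite hnormZ //.
move=> hD h2' h1'.
have h1'' : cabs a * hnorm ip (u n - l) <= cabs a * (eps / (2 * (cabs a + 1))).
  by rewrite ler_wpM2l // ltW.
have h3 : cabs a * (eps / (2 * (cabs a + 1))) <= eps / 2.
  have q : cabs a / (2 * (cabs a + 1)) <= 1 / 2.
    rewrite ler_pdivrMr //; lra.
  rewrite mulrA mulrAC.
  have := ler_wpM2r (ltW e0) q; lra.
lra.
Qed.

Lemma lim_const u l N0 : (forall n, (N0 <= n)%N -> u n = l) -> lim_to u l.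
Proof.
move=> h eps e0; exists N0 => n hn; by rewrite h // subrr hnorm0.
Qed.

Lemma lim_bound u l (B : R) : lim_to u l -> (forall n, hnorm ip (u n) <= B) ->
  hnorm ip l <= B.
Proof.
move=> hl hB; apply: le_of_forall_lt => eps e0.
have [N h] := hl _ e0.
have h1 := h N (leqnn N); have h2 := hB N.
have -> : l = u N - (u N - l) by rewrite opprB addrC subrK.
have := hnormB hH (u N) (u N - l).
lra.
Qed.

End Lim.


Lemma forward (R : realType) (H : lmodType R[i]) (ip : H -> H -> R[i])
  (D : H -> Prop) (I : Type) (p : I -> H -> R)
  (hH : is_hilbert ip) (hsep : exists e : nat -> H, is_onb ip e)
  (hD : rigged ip D p)
  (xi : nat -> H) (hxi : forall n, D (xi n)) :
  riesz_fischer_like ip D p xi ->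
  exists zeta : nat -> H -> R[i], bessel_like D p zeta /\
    (forall n k : nat, zeta n (xi k) = (n == k)%:R).
Proof.
move=> hRF.
case: hsep => e honb; have he := honb.1.
case: (hRF e honb) => X [[[hXlin _ _] [S [hXS [i0 [c0 hS]]]]] hXe].
case: hD => [[D0 Dlin] hdense [pnn [ptri phom]] hdir [j [cj hj]]].
have Slin : forall a x y, D x -> D y -> S (a *: x + y) = a *: S x + S y.
  move=> a x y Dx Dy; have Dax : D (a *: x + y) by apply: Dlin.
  apply/eqP; rewrite -subr_eq0; apply/eqP.
  apply: (perp0 hH hdense) => z Dz.
  rewrite (ipBl hH) (ipDl hH) (ipZl hH) -!hXS //.
  by rewrite hXlin // subrr.
have Sxi : forall k, S (xi k) = e k.
  move=> k; apply/eqP; rewrite -subr_eq0; apply/eqP.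
  apply: (perp0 hH hdense) => z Dz.
  by rewrite (ipBl hH) -hXS // hXe // subrr.
have hen : forall n, hnorm ip (e n) = 1.
  by move=> n; apply: hnorm_of => //; rewrite he eqxx expr1n.
exists (fun n eta => conjc (ip (S eta) (e n))); split; last first.
  by move=> n k; rewrite Sxi he eq_sym conjc_nat.
split.
  move=> n; split.
    move=> a x y Dx Dy; rewrite Slin // (ipDl hH) (ipZl hH) conjcD conjcM //.
  exists i0, c0 => x Dx; rewrite cabsJ.
  apply: le_trans (CS hH _ _) _; rewrite hen mulr1; exact: hS.
move=> M [MD Mb]; case: (Mb i0) => b hb.
exists ((`|c0| * b) ^+ 2) => eta Meta N.
have := bessel hH he (S eta) N.
move=> hbes; under eq_bigr do rewrite /= cabsJ.
have h0 := hnorm_ge0 ip (S eta).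
have h1 := hS eta (MD _ Meta).
have h2 := hb eta Meta.
have h3 : c0 * p i0 eta <= `|c0| * p i0 eta.
  by rewrite ler_wpM2r ?ler_norm // (pnn i0 eta (MD _ Meta)).
have h4 : `|c0| * p i0 eta <= `|c0| * b by rewrite ler_wpM2l.
nra.
Qed.


Lemma cabs_sum (R : realType) (T : Type) (r : seq T) (P : pred T) (f : T -> R[i]) :
  cabs (\sum_(i <- r | P i) f i) <= \sum_(i <- r | P i) cabs (f i).
Proof.
rewrite -lecR realC_sum cabsE.
apply: le_trans (ler_norm_sum _ _ _) _.
by rewrite le_eqVlt; apply/orP; left; apply/eqP; apply: eq_bigr => i _; rewrite cabsE.
Qed.

Section Series.
Variable R : realType.
Local Notation C := R[i].
Variable H : lmodType C.
Variable ip : H -> H -> C.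
Hypothesis hH : is_hilbert ip.
Variable e : nat -> H.
Hypothesis he : forall n m : nat, ip (e n) (e m) = (n == m)%:R.

Lemma hnormBC x y : hnorm ip (x - y) = hnorm ip (y - x).
Proof. by rewrite -(hnormN hH) opprB. Qed.

Lemma series_lim (a : nat -> C) (B : R) :
  (forall n, \sum_(k < n) cabs (a k) ^+ 2 <= B) ->
  exists l, lim_to ip (fun n => \sum_(0 <= k < n) a k *: e k) l.
Proof.
move=> hB.
set T := fun n => \sum_(0 <= k < n) cabs (a k) ^+ 2.
have Tmon : forall n, T n <= T n.+1.
  by move=> n; rewrite /T big_nat_recr //= lerDl sqr_ge0.
have TB : forall n, T n <= B by move=> n; rewrite /T big_mkord.
have key : forall m n, (m <= n)%N ->
    hnorm ip (\sum_(0 <= k < n) a k *: e k - \sum_(0 <= k < m) a k *: e k) ^+ 2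
    = T n - T m.
  move=> m n mn.
  rewrite /T (big_cat_nat (leq0n m) mn) /= addrC addrK.
  rewrite (big_cat_nat (leq0n m) mn) /= [X in X - _]addrC addrK.
  by rewrite (pythagoras hH he) // /index_iota iota_uniq.
case: hH => _ _ _ hcomp.
apply: hcomp => eps e0.
have [N hN] := cauchy_mono Tmon TB (mulr_gt0 e0 e0).
exists N => m n Nm Nn.
have h0 := hnorm_ge0 ip (\sum_(0 <= k < m) a k *: e k - \sum_(0 <= k < n) a k *: e k).
case: (leqP n m) => nm.
  have := key _ _ nm; have := hN _ _ Nn nm; nra.
rewrite hnormBC.
have := key _ _ (ltnW nm); have := hN _ _ Nm (ltnW nm).
rewrite hnormBC in h0; nra.
Qed.

End Series.


Lemma common_bound (R : realType) (H : lmodType R[i]) (D : H -> Prop) (I : Type)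
  (p : I -> H -> R) (i0 : I)
  (pnn : forall i x, D x -> 0 <= p i x)
  (hdir : forall i j, exists k, forall x, D x -> p i x <= p k x /\ p j x <= p k x)
  (zeta : nat -> H -> R[i]) (hz : forall n, is_dual D p (zeta n)) N :
  exists i (c : R), 0 <= c /\ forall k, (k < N)%N -> forall x, D x ->
    cabs (zeta k x) <= c * p i x.
Proof.
elim: N => [|N [i [c [c0 IH]]]]; first by exists i0, 0.
case: (hz N) => _ [i' [c' hc']].
case: (hdir i i') => k0 hk0.
exists k0, (c + `|c'|); split; first by rewrite addr_ge0.
move=> k; rewrite ltnS leq_eqVlt => /orP [/eqP -> | kN] x Dx.
  have := hc' x Dx; have := hk0 x Dx; have := pnn i' x Dx; have := pnn i x Dx.
  have := ler_norm c'; have := normr_ge0 c'; nra.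
have := IH k kN x Dx; have := hk0 x Dx; have := pnn i' x Dx; have := pnn i x Dx.
have := normr_ge0 c'; nra.
Qed.

Lemma refl_bound (R : realType) (H : lmodType R[i]) (D : H -> Prop) (I : Type)
  (p : I -> H -> R) (i0 : I)
  (pnn : forall i x, D x -> 0 <= p i x)
  (hdir : forall i j, exists k, forall x, D x -> p i x <= p k x /\ p j x <= p k x)
  (hrefl3 : forall B, sbounded D p B -> exists i (c : R), forall xi Phi, D xi -> B Phi ->
          cabs (Phi xi) <= c * p i xi)
  (zeta : nat -> H -> R[i]) (hz : bessel_like D p zeta) :
  exists i (c : R), forall x n, D x ->
    Num.sqrt (\sum_(k < n) cabs (zeta k x) ^+ 2) <= c * p i x.
Proof.
case: hz => hzd hzb.
pose B := fun Phi : H -> R[i] => exists N (a : nat -> R[i]),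
  \sum_(k < N) cabs (a k) ^+ 2 <= 1 /\ Phi = (fun x => \sum_(k < N) a k * zeta k x).
have hB : sbounded D p B.
  split.
    move=> Phi [N [a [_ ->]]]; split.
      move=> b x y Dx Dy.
      rewrite mulr_sumr -big_split /=; apply: eq_bigr => k _.
      rewrite ((hzd k).1 b x y Dx Dy); ring.
    have [i [c [c0 hc]]] := common_bound i0 pnn hdir hzd N.
    exists i, ((\sum_(k < N) cabs (a k)) * c) => x Dx.
    apply: le_trans (cabs_sum _ _ _) _.
    rewrite -mulrA mulr_suml; apply: ler_sum => k _.
    rewrite cabsM; apply: ler_wpM2l; first exact: cabs_ge0.
    exact: hc.
  move=> M hM; case: (hzb M hM) => cb hcb.
  exists (1 + cb) => Phi eta [N [a [ha ->]]] Meta.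
  apply: le_trans (cabs_sum _ _ _) _.
  have := hcb eta Meta N.
  have : \sum_(k < N) cabs (a k * zeta k eta) <=
      \sum_(k < N) cabs (a k) ^+ 2 + \sum_(k < N) cabs (zeta k eta) ^+ 2.
    rewrite -big_split /=; apply: ler_sum => k _; rewrite cabsM.
    have := cabs_ge0 (a k); have := cabs_ge0 (zeta k eta); nra.
  lra.
have [i [c hc]] := hrefl3 B hB.
exists i, c => x n Dx.
set T := \sum_(k < n) cabs (zeta k x) ^+ 2.
have T0 : 0 <= T by apply: sumr_ge0 => k _; exact: sqr_ge0.
have hc0 : 0 <= c * p i x.
  have := hc x (fun y => \sum_(k < 0) (fun _ => 0) k * zeta k y) Dx.
  rewrite /= big_ord0 /cabs Normc.normc0; apply.
  exists 0%N, (fun _ => 0); split => //; by rewrite big_ord0.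
have [->|Tn0] := eqVneq T 0; first by rewrite sqrtr0.
have Tp : 0 < T by rewrite lt0r Tn0.
set s := Num.sqrt T.
have sp : 0 < s by rewrite sqrtr_gt0.
have ss : s ^+ 2 = T by rewrite sqr_sqrtr.
pose a := fun k => conjc (zeta k x) * ((s^-1)%:C)%C.
have ha : forall k, cabs (a k) ^+ 2 = cabs (zeta k x) ^+ 2 / T.
  move=> k; rewrite /a cabsM cabsJ cabsR ?invr_ge0 ?ltW // exprMn -ss exprVn //.
have := hc x (fun y => \sum_(k < n) a k * zeta k y) Dx.
have -> : \sum_(k < n) a k * zeta k x = ((s)%:C)%C.
  have -> : s = T / s by rewrite -ss expr2 mulfK // gt_eqF.
  rewrite realCM realCV /T realC_sum mulr_suml; apply: eq_bigr => k _.
  rewrite /a cabs2 -realCV; ring.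
rewrite cabsR; last exact: ltW.
move=> h; apply: h.
exists n, a; split => //.
under eq_bigr do rewrite ha.
by rewrite -mulr_suml -/T mulfV.
Qed.

Lemma backward (R : realType) (H : lmodType R[i]) (ip : H -> H -> R[i])
  (D : H -> Prop) (I : Type) (p : I -> H -> R)
  (hH : is_hilbert ip)
  (hD : rigged ip D p) (hrefl : treflexive D p)
  (xi : nat -> H) (hxi : forall n, D (xi n)) :
  (exists zeta : nat -> H -> R[i], bessel_like D p zeta /\
    (forall n k : nat, zeta n (xi k) = (n == k)%:R)) ->
  riesz_fischer_like ip D p xi.
Proof.
move=> [zeta [hzeta hbio]] e [he _].
case: hD => [[D0 Dlin] hdense [pnn [ptri phom]] hdir [j [cj hj]]].
case: hrefl => _ _ hrefl3.
have [ib [cb hcb]] := refl_bound j pnn hdir hrefl3 hzeta.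
case: (hzeta) => hzd hzb.
pose s := fun x n => \sum_(0 <= k < n) conjc (zeta k x) *: e k.
have hTB : forall x, D x -> exists B, forall n,
    \sum_(k < n) cabs (conjc (zeta k x)) ^+ 2 <= B.
  move=> x Dx.
  have hM : tbounded D p (fun y => y = x).
    split; first by move=> y ->.
    by move=> i; exists (p i x) => y ->.
  case: (hzb _ hM) => B hB; exists B => n.
  under eq_bigr do rewrite cabsJ.
  exact: hB.
pose S := fun x => epsilon (inhabits (0 : H)) (fun l => lim_to ip (s x) l).
have hS : forall x, D x -> lim_to ip (s x) (S x).
  move=> x Dx; case: (hTB x Dx) => B hB.
  have hex := @series_lim _ _ _ hH _ he (fun k => conjc (zeta k x)) B hB.
  rewrite /S.
  exact: (epsilon_spec (inhabits (0 : H)) _ hex).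
have Slin : forall a x y, D x -> D y -> S (a *: x + y) = a *: S x + S y.
  move=> a x y Dx Dy.
  apply: (lim_unique hH (hS _ (Dlin _ _ _ Dx Dy))).
  have -> : s (a *: x + y) = fun n => a *: s x n + s y n.
    apply: functional_extensionality => n; rewrite /s scaler_sumr -big_split /=.
    apply: eq_bigr => k _; rewrite ((hzd k).1 a x y Dx Dy) conjcD conjcM conjcK.
    by rewrite scalerDl scalerA.
  exact: (lim_lin hH a (hS _ Dx) (hS _ Dy)).
have Sxi : forall n, S (xi n) = e n.
  move=> n; apply: (lim_unique hH (hS _ (hxi n))).
  apply: (@lim_const _ _ _ hH _ _ n.+1) => m nm.
  have z1 : \sum_(0 <= k < n) conjc (zeta k (xi n)) *: e k = 0.
    apply: big1_seq => k /andP [_]; rewrite mem_index_iota => /andP [_ kn].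
    by rewrite hbio (ltn_eqF kn) conjc0 scale0r.
  have z2 : \sum_(n.+1 <= k < m) conjc (zeta k (xi n)) *: e k = 0.
    apply: big1_seq => k /andP [_]; rewrite mem_index_iota => /andP [nk _].
    by rewrite hbio (gtn_eqF nk) conjc0 scale0r.
  rewrite /s (big_cat_nat (leq0n n.+1) nm) /= z2 addr0 big_nat_recr //= z1 add0r.
  by rewrite hbio eqxx conjc1 scale1r.
have Sbound : forall x, D x -> hnorm ip (S x) <= cb * p ib x.
  move=> x Dx; apply: (lim_bound hH (hS _ Dx)) => n.
  have h := hcb x n Dx.
  suff -> : hnorm ip (s x n) = Num.sqrt (\sum_(k < n) cabs (zeta k x) ^+ 2) by [].
  rewrite -[LHS]ger0_norm ?hnorm_ge0 // -sqrtr_sqr (pythagoras hH he).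
    by rewrite big_mkord; under eq_bigr do rewrite cabsJ.
  by rewrite /index_iota iota_uniq.
have hcS : forall x, D x -> 0 <= cb * p ib x.
  by move=> x Dx; apply: le_trans (hnorm_ge0 ip (S x)) (Sbound x Dx).
exists (fun x eta => ip (S x) eta); split; last first.
  by move=> n eta Deta /=; rewrite Sxi.
split; last first.
  exists S; split => //; exists ib, cb; exact: Sbound.
split.
- move=> a x y eta Dx Dy Deta /=.
  by rewrite Slin // (ipDl hH) (ipZl hH).
- move=> x Dx; split.
    by move=> a y z Dy Dz /=; rewrite (ipDr hH) (ipZr hH).
  exists j, (hnorm ip (S x) * cj) => y Dy /=.
  apply: le_trans (CS hH _ _) _; rewrite -mulrA.
  by apply: ler_wpM2l; [exact: hnorm_ge0 | exact: hj].
- move=> M [MD Mb]; case: (Mb j) => bj hbj.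
  exists ib, (cb * (`|cj| * bj)) => x eta Dx Meta.
  have Deta := MD _ Meta.
  apply: le_trans (CS hH _ _) _.
  have h1 := Sbound x Dx.
  have h2 := hj eta Deta.
  have h3 := hbj eta Meta.
  have h4 := pnn j eta Deta.
  have h5 := hnorm_ge0 ip (S x).
  have h6 := hnorm_ge0 ip eta.
  have h7 : cj * p j eta <= `|cj| * bj.
    apply: le_trans (_ : `|cj| * p j eta <= _).
      by rewrite ler_wpM2r // ler_norm.
    by rewrite ler_wpM2l.
  have h8 := hcS x Dx.
  rewrite mulrAC.
  apply: le_trans (_ : hnorm ip (S x) * (`|cj| * bj) <= _).
    apply: ler_wpM2l => //; exact: le_trans h2 h7.
  rewrite mulrC [X in _ <= X]mulrC; apply: ler_wpM2l => //.
  exact: le_trans h6 (le_trans h2 h7).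
Qed.


Unset Implicit Arguments.

Theorem proposition2p16 (R : realType) (H : lmodType R[i]) (ip : H -> H -> R[i])
  (D : H -> Prop) (I : Type) (p : I -> H -> R)
  (hH : is_hilbert ip) (hsep : exists e : nat -> H, is_onb ip e)
  (hD : rigged ip D p) (hcompl : tcomplete D p) (hrefl : treflexive D p)
  (xi : nat -> H) (hxi : forall n, D (xi n)) :
  riesz_fischer_like ip D p xi <->
  exists zeta : nat -> H -> R[i], bessel_like D p zeta /\
    (forall n k : nat, zeta n (xi k) = (n == k)%:R).
Proof.
split.
  exact: forward hH hsep hD xi hxi.
exact: backward hH hD hrefl xi hxi.
Qed.
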